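(* Let $K$ be a field, $m\ge2$, $d_1,\ldots,d_m$ positive integers, and $I_2(D)\subset K[x_1,\ldots,x_m,y_1,\ldots,y_m]$ the ideal generated by the $2$-minors of $D=\begin{pmatrix}x_1^{d_1}&\cdots&x_m^{d_m}\\ y_1^{d_1}&\cdots&y_m^{d_m}\end{pmatrix}$. Then $I_2(D)$ is generated by its indispensable binomials.
   Context: A binomial $B\in I_2(D)$ is indispensable if every system of binomial generators of $I_2(D)$ contains $B$ or $-B$. *)

(* Defs.v *)
From HB Require Import structures.
From mathcomp Require Import all_boot all_algebra.
From mathcomp Require Import mpoly.

Set Implicit Arguments.
Unset Strict Implicit.
Unset Printing Implicit Defensive.

Import GRing.Theory.
Local Open Scope ring_scope.

Definition in_ideal_gen (R : comNzRingType) (S : R -> Prop) (p : R) : Prop :=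
  exists (n : nat) (r g : 'I_n -> R),
    (forall i, S (g i)) /\ p = \sum_(i < n) r i * g i.

Definition binomial (K : fieldType) (n : nat) (p : {mpoly K[n]}) : Prop :=
  exists u v : 'X_{1..n}, u != v /\ p = 'X_[u] - 'X_[v].

Definition xvar (K : fieldType) (m : nat) (i : 'I_m) : {mpoly K[m + m]} :=
  'X_(lshift m i).
Definition yvar (K : fieldType) (m : nat) (i : 'I_m) : {mpoly K[m + m]} :=
  'X_(rshift m i).

Definition two_minor (K : fieldType) (m : nat) (d : 'I_m -> nat)
    (p : {mpoly K[m + m]}) : Prop :=
  exists i j : 'I_m, (i < j)%N /\
    p = @xvar K m i ^+ d i * @yvar K m j ^+ d j - @xvar K m j ^+ d j * @yvar K m i ^+ d i.

Definition I2D (K : fieldType) (m : nat) (d : 'I_m -> nat) (p : {mpoly K[m + m]})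
  : Prop := in_ideal_gen (@two_minor K m d) p.

Definition binomial_generating_system (K : fieldType) (m : nat) (d : 'I_m -> nat)
    (G : {mpoly K[m + m]} -> Prop) : Prop :=
  (forall g, G g -> binomial g) /\
  (forall p, in_ideal_gen G p <-> I2D d p).

Definition indispensable (K : fieldType) (m : nat) (d : 'I_m -> nat)
    (B : {mpoly K[m + m]}) : Prop :=
  binomial B /\ I2D d B /\
  forall G, binomial_generating_system d G -> G B \/ G (- B).

(* Main.v *)
Require Import Defs.
From HB Require Import structures.
From mathcomp Require Import all_boot all_algebra.
From mathcomp Require Import mpoly.
From Stdlib Require Import Classical.
Set Implicit Arguments. Unset Strict Implicit. Unset Printing Implicit Defensive.
Import GRing.Theory.
Local Open Scope ring_scope.

Lemma ideal_single (R : comNzRingType) (S : R -> Prop) x : S x -> in_ideal_gen S x.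
Proof.
move=> Sx; exists 1%N, (fun _ => 1), (fun _ => x); split => //.
by rewrite big_ord1 mul1r.
Qed.

Lemma ideal0 (R : comNzRingType) (S : R -> Prop) : in_ideal_gen S 0.
Proof. by exists 0%N, (fun _ => 0), (fun _ => 0); split; [case|rewrite big_ord0]. Qed.

Lemma idealD (R : comNzRingType) (S : R -> Prop) p q :
  in_ideal_gen S p -> in_ideal_gen S q -> in_ideal_gen S (p + q).
Proof.
move=> [n1 [r1 [g1 [H1 ->]]]] [n2 [r2 [g2 [H2 ->]]]].
exists (n1 + n2)%N, (fun k => match split k with inl a => r1 a | inr b => r2 b end),
  (fun k => match split k with inl a => g1 a | inr b => g2 b end); split.
  by move=> k; case: split.
rewrite big_split_ord /=; congr (_ + _); apply: eq_bigr => i _.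
  by rewrite -[lshift _ _]/(unsplit (inl _ i)) unsplitK.
by rewrite -[rshift _ _]/(unsplit (inr _ i)) unsplitK.
Qed.

Lemma idealM (R : comNzRingType) (S : R -> Prop) r p :
  in_ideal_gen S p -> in_ideal_gen S (r * p).
Proof.
move=> [n [r1 [g1 [H1 ->]]]]; exists n, (fun i => r * r1 i), g1; split => //.
by rewrite mulr_sumr; apply: eq_bigr => i _; rewrite mulrA.
Qed.

Lemma ideal_mono (R : comNzRingType) (S T : R -> Prop) p :
  (forall x, S x -> in_ideal_gen T x) -> in_ideal_gen S p -> in_ideal_gen T p.
Proof.
move=> ST [n [r [g [Hg ->]]]].
apply: (big_ind (in_ideal_gen T)); [exact: ideal0| exact: idealD|].
by move=> i _; apply/idealM/ST.
Qed.
Definition Am (m : nat) (d : 'I_m -> nat) (a b : 'I_m) : 'X_{1..m+m} :=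
  (U_(lshift m a) *+ d a + U_(rshift m b) *+ d b)%MM.

Definition lem' n (u v : 'X_{1..n}) := forall k, (u k <= v k)%N.

Lemma AmE m d a b k : Am d a b k = ((lshift m a == k) * d a + (rshift m b == k) * d b)%N.
Proof. by rewrite /Am mnmDE !mulmnE !mnm1E. Qed.

Lemma le_Am m (d : 'I_m -> nat) a b c e : (forall i, 0 < d i)%N ->
  lem' (Am d a b) (Am d c e) -> a = c /\ b = e.
Proof.
move=> dp H; split.
  have := H (lshift m a); rewrite !AmE !eq_rlshift eq_lshift eqxx /=.
  case: eqP => [/lshift_inj //|_] /=; rewrite !mul0n !addn0 mul1n => /(leq_trans (dp a)); by rewrite ltnn.
have := H (rshift m b); rewrite !AmE !eq_lrshift eq_rshift eqxx /=.
case: eqP => [/rshift_inj //|_] /=; rewrite !mul0n !add0n mul1n => /(leq_trans (dp b)); by rewrite ltnn.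
Qed.

Lemma minorE (K : fieldType) m (d : 'I_m -> nat) i j :
  @xvar K m i ^+ d i * @yvar K m j ^+ d j - @xvar K m j ^+ d j * @yvar K m i ^+ d i
  = 'X_[Am d i j] - 'X_[Am d j i].
Proof. by rewrite /xvar /yvar !mpolyXn -!mpolyXD. Qed.

Lemma lem_addK n (w u v : 'X_{1..n}) : lem' (w + u)%MM v -> lem' u v.
Proof. by move=> H k; apply: leq_trans (H k); rewrite mnmDE leq_addl. Qed.

Lemma lem_eq n (u v : 'X_{1..n}) : u = v -> lem' u v.
Proof. by move=> -> k. Qed.

Lemma addm_eq0 n (w u : 'X_{1..n}) : lem' (w + u)%MM u -> w = 0%MM.
Proof.
move=> H; apply/mnmP => k; have := H k; rewrite mnmDE mnm0E.
by rewrite -{2}[u k]add0n leq_add2r leqn0 => /eqP.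
Qed.

Lemma lin_mul (K : fieldType) n (L : {mpoly K[n]} -> K) (g r : {mpoly K[n]}) :
  (forall p q, L (p + q) = L p + L q) -> (forall c p, L (c *: p) = c * L p) ->
  (forall w, L ('X_[w] * g) = 0) -> L (r * g) = 0.
Proof.
move=> LD LZ LX; have L0 : L 0 = 0.
  by have := LZ 0 0; rewrite scale0r mul0r.
rewrite (mpolyE r) mulr_suml.
apply: (big_ind (fun p => L p = 0)) => //.
  by move=> x y Hx Hy; rewrite LD Hx Hy addr0.
by move=> w _; rewrite -scalerAl LZ LX mulr0.
Qed.

Lemma lin_I2D (K : fieldType) m (d : 'I_m -> nat) (L : {mpoly K[m+m]} -> K) (p : {mpoly K[m+m]}) :
  (forall p q, L (p + q) = L p + L q) -> (forall c p, L (c *: p) = c * L p) ->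
  (forall w (a b : 'I_m), (a < b)%N -> L ('X_[w] * ('X_[Am d a b] - 'X_[Am d b a])) = 0) ->
  I2D d p -> L p = 0.
Proof.
move=> LD LZ LX [n [r [g [Hg ->]]]].
have L0 : L 0 = 0 by have := LZ 0 0; rewrite scale0r mul0r.
apply: (big_ind (fun p => L p = 0)) => //.
  by move=> x y Hx Hy; rewrite LD Hx Hy addr0.
move=> k _; have [a [b [ab ->]]] := Hg k; rewrite minorE.
by apply: lin_mul => // w; apply: LX.
Qed.
Lemma eqA m (d : 'I_m -> nat) (dp : forall i, (0 < d i)%N) (w : 'X_{1..m+m}) a b c e :
  (w + Am d a b == Am d c e)%MM = [&& w == 0%MM, a == c & b == e].
Proof.
apply/eqP/and3P => [H|[/eqP -> /eqP -> /eqP ->]]; last by rewrite add0m.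
have [Ea Eb] := le_Am dp (lem_addK (lem_eq H)); subst.
split => //; apply/eqP; apply: (@addm_eq0 _ _ (Am d c e)); exact: lem_eq.
Qed.

Lemma Q1 (K : fieldType) m (d : 'I_m -> nat) (dp : forall i, (0 < d i)%N) (i j : 'I_m) :
  (i < j)%N -> forall p : {mpoly K[m+m]}, I2D d p ->
  forall z, lem' z (Am d i j) -> z != Am d i j -> p@_z = 0.
Proof.
move=> ij p Ip z zM zn; apply: (@lin_I2D K m d (mcoeff z)) Ip.
- by move=> ? ?; rewrite mcoeffD.
- by move=> ? ?; rewrite mcoeffZ.
move=> w a b ab; rewrite mulrBr -!mpolyXD mcoeffB !mcoeffX.
have F : forall a' b', (w + Am d a' b')%MM = z -> a' = i /\ b' = j /\ w = 0%MM.
  move=> a' b' E; have [Ea Eb] := le_Am dp (lem_addK (n:=m+m) (w:=w) (v:=Am d i j)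
     (fun k => leq_trans (lem_eq E k) (zM k))).
  move: E; rewrite Ea Eb => E; split => //; split => //; apply: (@addm_eq0 _ _ (Am d i j)).
  by move=> k; rewrite E; apply: zM.
case: eqP => [E|_].
  by have [Ea [Eb Ew]] := F _ _ E; rewrite -E Ea Eb Ew add0m eqxx in zn.
case: eqP => [/F [Eb [Ea _]]|_]; last by rewrite subrr.
by subst; move: (ltn_trans ab ij); rewrite ltnn.
Qed.

Lemma Q2 (K : fieldType) m (d : 'I_m -> nat) (dp : forall i, (0 < d i)%N) (i j : 'I_m) :
  (i < j)%N -> forall p : {mpoly K[m+m]}, I2D d p ->
  p@_(Am d i j) + p@_(Am d j i) = 0.
Proof.
move=> ij p Ip; apply: (@lin_I2D K m d (fun p => p@_(Am d i j) + p@_(Am d j i))) Ip.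
- by move=> ? ?; rewrite !mcoeffD addrACA.
- by move=> ? ?; rewrite !mcoeffZ mulrDr.
move=> w a b ab; rewrite mulrBr -!mpolyXD !mcoeffB !mcoeffX !eqA //.
have Hba : (b == i) && (a == j) = false.
  by apply/negbTE/negP => /andP [/eqP Eb /eqP Ea]; subst; move: (ltn_trans ab ij); rewrite ltnn.
have Hab : (a == j) && (b == i) = false by rewrite andbC.
rewrite Hba Hab !andbF subr0 sub0r.
by rewrite [(b == j) && _]andbC subrr.
Qed.
Lemma AmN m (d : 'I_m -> nat) (dp : forall i, (0 < d i)%N) (i j : 'I_m) :
  (i < j)%N -> Am d i j != Am d j i.
Proof.
move=> ij; apply/eqP => E; have [Ei _] := le_Am dp (lem_eq E).
by move: ij; rewrite Ei ltnn.
Qed.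

Lemma bin_eq (K : fieldType) m (d : 'I_m -> nat) (dp : forall i, (0 < d i)%N) (i j : 'I_m) :
  (i < j)%N -> forall u v : 'X_{1..m+m}, u != v -> lem' u (Am d i j) ->
  I2D d ('X_[u] - 'X_[v] : {mpoly K[m+m]}) ->
  ('X_[u] - 'X_[v] : {mpoly K[m+m]}) = 'X_[Am d i j] - 'X_[Am d j i].
Proof.
move=> ij u v uv uM Ig.
have EuM : u = Am d i j.
  apply/eqP; apply: contraT => un; have := Q1 dp ij Ig uM un.
  rewrite mcoeffB !mcoeffX eqxx eq_sym (negbTE uv) subr0.
  by move/eqP; rewrite oner_eq0.
subst u; have := Q2 dp ij Ig.
rewrite !mcoeffB !mcoeffX eqxx (negbTE (AmN dp ij)) eq_sym (negbTE uv) subr0 sub0r.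
by case: eqP => [->//|_]; rewrite subr0 => /eqP; rewrite oner_eq0.
Qed.

Lemma minor_G (K : fieldType) m (d : 'I_m -> nat) (dp : forall i, (0 < d i)%N) (i j : 'I_m) :
  (i < j)%N -> forall G : {mpoly K[m+m]} -> Prop, binomial_generating_system d G ->
  let f := ('X_[Am d i j] - 'X_[Am d j i] : {mpoly K[m+m]}) in G f \/ G (- f).
Proof.
move=> ij G [Gb Gi] f.
have If : I2D d f.
  by rewrite /f -minorE; apply: ideal_single; exists i, j.
have [n [r [g [Hg Hf]]]] := (proj2 (Gi f) If).
apply: NNPP => Hno.
have : f@_(Am d i j) = 0.
  rewrite Hf raddf_sum; apply: big1 => k _.
  have [u [v [uv Eg]]] := Gb _ (Hg k).
  have Ig : I2D d (g k) by apply/Gi/ideal_single.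
  have [uM|uM] := classic (lem' u (Am d i j)).
    by exfalso; apply: Hno; left; rewrite /f -(bin_eq dp ij uv uM) -?Eg //; rewrite -Eg.
  have [vM|vM] := classic (lem' v (Am d i j)).
    exfalso; apply: Hno; right.
    have Ig' : I2D d ('X_[v] - 'X_[u] : {mpoly K[m+m]}).
      by rewrite -opprB -Eg -mulN1r; apply: idealM.
    by rewrite /f -(bin_eq dp ij (v:=u) _ vM Ig') ?opprB -?Eg // eq_sym.
  rewrite Eg; apply: (@lin_mul K (m+m) (mcoeff (Am d i j))).
  - by move=> ? ?; rewrite mcoeffD.
  - by move=> ? ?; rewrite mcoeffZ.
  move=> w; rewrite mulrBr -!mpolyXD mcoeffB !mcoeffX.
  case: eqP => [E|_]; first by exfalso; apply: uM; apply: (@lem_addK _ w); apply: lem_eq.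
  case: eqP => [E|_]; first by exfalso; apply: vM; apply: (@lem_addK _ w); apply: lem_eq.
  by rewrite subrr.
rewrite /f mcoeffB !mcoeffX eqxx eq_sym (negbTE (AmN dp ij)) subr0 => /eqP.
by rewrite oner_eq0.
Qed.

Lemma minor_indisp (K : fieldType) m (d : 'I_m -> nat) (dp : forall i, (0 < d i)%N)
  (x : {mpoly K[m+m]}) : two_minor d x -> indispensable d x.
Proof.
move=> Hx; split; last split.
- have [i [j [ij ->]]] := Hx; rewrite minorE.
  by exists (Am d i j), (Am d j i); split => //; apply: AmN.
- exact: ideal_single.
move=> G HG; have [i [j [ij ->]]] := Hx; rewrite minorE.
exact: minor_G.
Qed.

Theorem proposition4p6 (K : fieldType) (m : nat) (d : 'I_m -> nat) :
  (2 <= m)%N -> (forall i, (0 < d i)%N) ->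
  forall p : {mpoly K[m + m]},
    I2D d p <-> in_ideal_gen (indispensable d) p.
Proof.
move=> _ dp p; split; apply: ideal_mono => x Hx.
  by apply: ideal_single; apply: minor_indisp.
exact: (proj1 (proj2 Hx)).
Qed.
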